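(* For all real $a,r$ with $0<a<1$, $0<r<1$ and $a\neq r$, $$\frac12(a^2+1)^2\left[\frac{1}{(ar+1)^2(a-r)^2}+\frac{1}{(r+a)^2(ar-1)^2}\right]-\frac{(1-r^2)r}{(1+r^2)^4}>0.$$ *)

(* Defs.v *)
From Stdlib Require Export Reals Lra.

(* Main.v *)
Require Import Defs.
From Stdlib Require Import Reals Lra Psatz.
Open Scope R_scope.

Theorem lemma1 (a r : R) (ha0 : 0 < a) (ha1 : a < 1) (hr0 : 0 < r) (hr1 : r < 1)
  (har : a <> r) :
  (1/2) * (a^2 + 1)^2 *
    (1 / ((a*r + 1)^2 * (a - r)^2) + 1 / ((r + a)^2 * (a*r - 1)^2))
  - (1 - r^2) * r / (1 + r^2)^4 > 0.
Proof.
  assert (Hp : 0 < (a*r+1)*(a-r) * ((a*r+1)*(a-r)) < 1).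
  { destruct (Rlt_or_le r a) as [H|H].
    - assert (0 < (a*r+1)*(a-r) < 1).
      { split. apply Rmult_lt_0_compat; nra.
        assert ((a*r+1)*(a-r) <= (r+1)*(a-r)) by (apply Rmult_le_compat_r; nra).
        assert ((r+1)*(a-r) < (r+1)*(1-r)) by (apply Rmult_lt_compat_l; lra). nra. }
      nra.
    - assert (H' : a < r) by lra.
      assert (0 < (a*r+1)*(r-a) < 1).
      { split. apply Rmult_lt_0_compat; nra.
        assert (0 < a*(1 - r^2 + a*r)) by (apply Rmult_lt_0_compat; nra). nra. }
      nra. }
  set (X := (a*r+1)^2*(a-r)^2).
  assert (HX : X = (a*r+1)*(a-r) * ((a*r+1)*(a-r))) by (unfold X; ring).
  assert (HX0 : 0 < X < 1) by lra.
  assert (HY : 0 < (r + a)^2 * (a*r - 1)^2).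
  { apply Rmult_lt_0_compat; rewrite <- !Rsqr_pow2; apply Rsqr_pos_lt; nra. }
  assert (H1 : 1 < 1 / X).
  { apply (Rmult_lt_reg_r X); [lra|]. unfold Rdiv. rewrite Rmult_assoc, Rinv_l by lra. lra. }
  assert (H2 : 0 < 1 / ((r + a)^2 * (a*r - 1)^2)).
  { apply Rdiv_lt_0_compat; lra. }
  assert (H3 : 1 <= (a^2+1)^2) by nra.
  assert (H4 : 1 <= (1 + r^2)^4).
  { assert (1 <= 1 + r^2) by nra. 
    replace ((1+r^2)^4) with ((1+r^2)^2*(1+r^2)^2) by ring. nra. }
  assert (H5 : (1 - r^2) * r / (1 + r^2)^4 <= (1 - r^2) * r).
  { unfold Rdiv. assert (0 < / (1+r^2)^4 <= 1).
    { split. apply Rinv_0_lt_compat; lra. rewrite <- Rinv_1. apply Rinv_le_contravar; lra. }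
    assert (0 <= (1 - r^2)*r) by nra. nra. }
  assert (H6 : (1 - r^2) * r < 1/2) by nra.
  nra.
Qed.
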